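(* Let $D$ be an oriented graph and $D'$ a subdigraph of $D$. If $S$ is a minimum hull set of $D$ in the two-path convexity, then $|S\cap V(D')|\leq \overrightarrow{hn}_{P_3}(D')$.
   Context: An oriented graph is an orientation of a finite simple graph. The two-path interval function on an oriented graph $D$ is $I_{P_3}(u,v)=\{u,v\}$ together with all vertices $w$ with $(u,w),(w,v)\in A(D)$ or $(v,w),(w,u)\in A(D)$. For $S\subseteq V(D)$, $I_{P_3}(S)=\bigcup_{u,v\in S}I_{P_3}(u,v)$; $C$ is convex if $I_{P_3}(C)=C$; the convex hull of $S$ is the smallest convex set containing $S$; a hull set is a set whose convex hull is $V(D)$, and $\overrightarrow{hn}_{P_3}(D)$ is the minimum size of a hull set (computed in $D'$ itself for $\overrightarrow{hn}_{P_3}(D')$). *)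

(* Defs.v *)
(* A digraph on a finite vertex type T is given by a vertex
   set V : {set T} and an arc relation a : rel T (arcs among vertices of V). *)
From mathcomp Require Import all_boot.
Set Implicit Arguments. Unset Strict Implicit. Unset Printing Implicit Defensive.

Definition oriented {T : finType} (a : rel T) : Prop :=
  (forall x, ~~ a x x) /\ (forall x y, a x y -> ~~ a y x).

Definition subdigraph {T : finType} (a : rel T) (V' : {set T}) (a' : rel T) : Prop :=
  forall x y, a' x y -> [/\ a x y, x \in V' & y \in V'].

Definition P3_interval {T : finType} (a : rel T) (u v : T) : {set T} :=
  [set u; v] :|: [set w | (a u w && a w v) || (a v w && a w u)].

Definition P3_interval_set {T : finType} (a : rel T) (S : {set T}) : {set T} :=
  \bigcup_(u in S) \bigcup_(v in S) P3_interval a u v.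

Definition P3_convex {T : finType} (V : {set T}) (a : rel T) (C : {set T}) : bool :=
  (C \subset V) && (P3_interval_set a C == C).

Definition P3_hull {T : finType} (V : {set T}) (a : rel T) (S : {set T}) : {set T} :=
  \bigcap_(C : {set T} | P3_convex V a C && (S \subset C)) C.

Definition P3_hull_set {T : finType} (V : {set T}) (a : rel T) (S : {set T}) : bool :=
  (S \subset V) && (P3_hull V a S == V).

(* hull number: minimum size of a hull set (V itself is always a hull set
   when arcs stay inside V, so #|V| is a harmless default). *)
Definition P3_hull_number {T : finType} (V : {set T}) (a : rel T) : nat :=
  \big[minn/#|V|]_(S : {set T} | P3_hull_set V a S) #|S|.

Definition P3_min_hull_set {T : finType} (V : {set T}) (a : rel T) (S : {set T}) : bool :=
  P3_hull_set V a S && (#|S| == P3_hull_number V a).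

(* Main.v *)
Require Import Defs.
From mathcomp Require Import all_boot.

Lemma hn_le (T : finType) (V : {set T}) (a : rel T) (R : {set T}) :
  P3_hull_set V a R -> P3_hull_number V a <= #|R|.
Proof.
move=> HR; rewrite /P3_hull_number.
have : R \in index_enum {set T} by rewrite mem_index_enum.
elim: (index_enum _) => [|i r IH] //; rewrite big_cons inE.
case/orP => [/eqP <-|Hr]; first by rewrite HR geq_minl.
case: (P3_hull_set V a i); last exact: IH.
by rewrite geq_min IH ?orbT.
Qed.

Lemma le_hn (T : finType) (V : {set T}) (a : rel T) (x : nat) :
  x <= #|V| -> (forall R, P3_hull_set V a R -> x <= #|R|) ->
  x <= P3_hull_number V a.
Proof.
move=> H0 H; rewrite /P3_hull_number.
elim/big_ind: _ => //.
- by move=> m n Hm Hn; rewrite leq_min Hm Hn.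
Qed.

Theorem proposition8 (T : finType) (a : rel T) (V' : {set T}) (a' : rel T)
  (S : {set T}) :
  oriented a -> subdigraph a V' a' ->
  P3_min_hull_set [set: T] a S ->
  #|S :&: V'| <= P3_hull_number V' a'.
Proof.
move=> _ Hsub /andP[/andP[_ /eqP HS] /eqP Hmin].
apply: le_hn; first by rewrite subset_leq_card ?subsetIr.
move=> S' /andP[S'V /eqP HS'].
set R := (S :\: V') :|: S'.
have HR : P3_hull_set [set: T] a R.
  apply/andP; split; first exact: subsetT.
  apply/eqP/setP => x; rewrite inE.
  apply/bigcapP => C /andP[/andP[_ /eqP convC] RC].
  have VC : V' \subset C.
    apply/subsetP => y yV.
    have : y \in P3_hull V' a' S' by rewrite HS'.
    move/bigcapP => /(_ (C :&: V')) H.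
    have : y \in C :&: V'.
      apply: H; apply/andP; split.
      - apply/andP; split; first exact: subsetIr.
        rewrite eqEsubset; apply/andP; split.
        + apply/subsetP => z /bigcupP[u uC /bigcupP[v vC]].
          move: uC vC; rewrite !inE => /andP[uC uV] /andP[vC vV].
          case/orP => [/orP[] /eqP -> |]; rewrite ?uC ?uV ?vC ?vV //.
          case/orP => /andP[h1 h2]; have [b1 _ zV] := Hsub _ _ h1;
            have [b2 _ _] := Hsub _ _ h2; rewrite zV andbT -convC.
          * apply/bigcupP; exists u => //; apply/bigcupP; exists v => //.
            by rewrite /P3_interval !inE b1 b2 !orbT.
          * apply/bigcupP; exists v => //; apply/bigcupP; exists u => //.
            by rewrite /P3_interval !inE b1 b2 !orbT.
        + apply/subsetP => z zC; apply/bigcupP; exists z => //.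
          by apply/bigcupP; exists z => //; rewrite /P3_interval !inE eqxx.
      - rewrite subsetI S'V andbT.
        by apply: subset_trans RC; apply: subsetUr.
    by rewrite inE => /andP[].
  have : x \in P3_hull [set: T] a S by rewrite HS inE.
  move/bigcapP; apply; rewrite /P3_convex convC eqxx subsetT /=.
  apply/subsetP => y yS; case: (boolP (y \in V')) => yV.
    by apply: (subsetP VC).
  by apply: (subsetP RC); rewrite !inE yV yS.
have h1 := @hn_le _ _ _ _ HR; rewrite -Hmin in h1.
have h2 := cardsID V' S.
have [h3 _] := leq_card_setU (S :\: V') S'.
have h4 := leq_trans h1 h3.
rewrite -h2 addnC in h4.
by rewrite -(leq_add2l #|S :\: V'|).
Qed.
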